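(* For the opinion--action model described in the context with $\phi\in(0,1)$ and any initial values, there exists a constant $\alpha>0$ such that for all $i,j\in\{1,\dots,2n\}$ and all $t\ge1$, if $p_{ij}(t)>0$ then $p_{ij}(t)\ge\alpha$, where $p_{ij}(t)$ denotes the $(i,j)$ entry of $P(t)$.
   Context: Fix an integer $n\ge 1$, $\mathcal{V}=\{1,\dots,n\}$, $\epsilon\in[0,1]$ and $\phi\in[0,1]$. Opinions $x_i(t)$ and actions $y_i(t)$ evolve for $t\in\mathbb{Z}_{\ge0}$ by: $\mathcal{N}_i(t)=\{j\in\mathcal{V}\mid j\neq i,\ |x_i(t)-y_j(t)|\le\epsilon\}$; $x_i(t+1)=\frac{x_i(t)+\sum_{j\in\mathcal{N}_i(t)}y_j(t)}{|\mathcal{N}_i(t)|+1}$; $y_i(t+1)=\phi\,x_i(t+1)+\frac{1-\phi}{n}\sum_{k=1}^n y_k(t)$, with initial values in $[0,1]$. For $t\ge1$, $P(t)=\begin{bmatrix}P_{11}(t)&P_{12}(t)\\ P_{21}&P_{22}\end{bmatrix}\in\mathbb{R}^{2n\times2n}$ with $n\times n$ blocks $[P_{11}(t)]_{ij}=\frac{1}{|\mathcal{N}_i(t)|+1}$ if $j=i$, $\frac{\phi}{|\mathcal{N}_i(t)|+1}$ if $j\in\mathcal{N}_i(t)$, $0$ otherwise; $[P_{12}(t)]_{ij}=\frac{(1-\phi)|\mathcal{N}_i(t)|}{(|\mathcal{N}_i(t)|+1)n}$ for all $i,j$; $P_{21}=\phi I_n$; $P_{22}=\frac{1-\phi}{n}\mathbf{1}_n\mathbf{1}_n^\top$.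 *)

(* Defs.v *)
From HB Require Import structures.
From mathcomp Require Import all_boot all_order all_algebra.
Set Implicit Arguments. Unset Strict Implicit. Unset Printing Implicit Defensive.
Import Order.TTheory GRing.Theory Num.Theory.
Local Open Scope ring_scope.

Section OpinionAction.
Variables (R : realFieldType) (n : nat) (eps phi : R).

(* A state of the model: opinions x and actions y of the n agents. *)
Definition state := (('I_n -> R) * ('I_n -> R))%type.

Definition nbrs (s : state) (i : 'I_n) : {set 'I_n} :=
  [set j : 'I_n | (j != i) && (`|s.1 i - s.2 j| <= eps)].

Definition step (s : state) : state :=
  let xn := fun i : 'I_n =>
    (s.1 i + \sum_(j in nbrs s i) s.2 j) / (#|nbrs s i|%:R + 1) in
  (xn, fun i : 'I_n => phi * xn i + (1 - phi) / n%:R * \sum_(k < n) s.2 k).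

Fixpoint traj (x0 y0 : 'I_n -> R) (t : nat) : state :=
  match t with
  | 0 => (x0, y0)
  | t'.+1 => step (traj x0 y0 t')
  end.

Definition Nbr (x0 y0 : 'I_n -> R) (t : nat) (i : 'I_n) : {set 'I_n} :=
  nbrs (traj x0 y0 t) i.

Definition P11 x0 y0 t : 'M[R]_n :=
  \matrix_(i, j)
    (if j == i then 1 / (#|Nbr x0 y0 t i|%:R + 1)
     else if j \in Nbr x0 y0 t i then phi / (#|Nbr x0 y0 t i|%:R + 1)
     else 0).

Definition P12 x0 y0 t : 'M[R]_n :=
  \matrix_(i, j)
    ((1 - phi) * #|Nbr x0 y0 t i|%:R / ((#|Nbr x0 y0 t i|%:R + 1) * n%:R)).

Definition P21 : 'M[R]_n := phi%:M.

Definition P22 : 'M[R]_n := \matrix_(i, j) ((1 - phi) / n%:R).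

Definition Pmat x0 y0 t : 'M[R]_(n + n) :=
  block_mx (P11 x0 y0 t) (P12 x0 y0 t) P21 P22.

End OpinionAction.

(* Main.v *)
Require Import Defs.
From HB Require Import structures.
From mathcomp Require Import all_boot all_order all_algebra.
From mathcomp Require Import ring lra.
Import Order.TTheory GRing.Theory Num.Theory.
Local Open Scope ring_scope.

Lemma le_div_helper (R : realFieldType) (a x d : R) :
  0 < d -> a * d <= x -> a <= x / d.
Proof. by move=> d0 h; rewrite ler_pdivlMr. Qed.

Theorem lemma2 (R : realFieldType) (n : nat) (eps phi : R) (x0 y0 : 'I_n -> R) :
  (1 <= n)%N ->
  0 <= eps <= 1 ->
  0 < phi < 1 ->
  (forall i, 0 <= x0 i <= 1) ->
  (forall i, 0 <= y0 i <= 1) ->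
  exists alpha : R, 0 < alpha /\
    forall (t : nat) (i j : 'I_(n + n)), (1 <= t)%N ->
      0 < Pmat eps phi x0 y0 t i j -> alpha <= Pmat eps phi x0 y0 t i j.
Proof.
move=> n1 _ /andP[p0 p1] _ _.
set N : R := n%:R.
have N1 : 1 <= N by rewrite /N ler1n.
exists (phi * (1 - phi) / ((N + 1) * N)); split.
  apply: divr_gt0; first by apply: mulr_gt0; lra.
  by apply: mulr_gt0; lra.
move=> t i j _.
have kb : forall S : {set 'I_n}, 0 <= (#|S|%:R : R) <= N.
  move=> S; rewrite ler0n /= /N ler_nat.
  by rewrite -[X in (_ <= X)%N]card_ord max_card.
have dpos : 0 < (N + 1) * N by apply: mulr_gt0; lra.
rewrite -(splitK i) -(splitK j).
case: (split i) => a; case: (split j) => b /=.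
- rewrite block_mxEul /P11 mxE.
  have /andP[k0 kN] := kb (Nbr eps phi x0 y0 t a).
  set k := (#|Nbr eps phi x0 y0 t a|%:R : R) in k0 kN *.
  have k1 : 0 < k + 1 by lra.
  have h1 : k + 1 <= (N + 1) * N by nra.
  have h3 : 0 <= phi * phi * (k + 1) by apply: mulr_ge0; [nra|lra].
  have h2 : phi * (1 - phi) * (k + 1) <= phi * ((N + 1) * N) by nra.
  case: ifP => _.
    move=> _; rewrite ler_pdivlMr // mulrAC ler_pdivrMr //.
    nra.
  case: ifP => _; last by rewrite ltxx.
  move=> _; rewrite ler_pdivlMr // mulrAC ler_pdivrMr //.
- rewrite block_mxEur /P12 mxE.
  have /andP[k0 kN] := kb (Nbr eps phi x0 y0 t a).
  set k := (#|Nbr eps phi x0 y0 t a|%:R : R) in k0 kN *.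
  have k1 : 0 < k + 1 by lra.
  have dk : 0 < (k + 1) * N by apply: mulr_gt0; lra.
  move=> hpos.
  have kp : 1 <= k.
    have : k != 0.
      apply/eqP => k00; move: hpos; rewrite k00 mulr0 mul0r ltxx //.
    rewrite /k pnatr_eq0 -lt0n => h; by rewrite ler1n.
  rewrite ler_pdivlMr // mulrAC ler_pdivrMr //.
  have e0 : 0 <= N * (k * N - 1) by apply: mulr_ge0; nra.
  have e1 : (k + 1) * N <= k * ((N + 1) * N).
    rewrite -subr_ge0; have -> : k * ((N + 1) * N) - (k + 1) * N = N * (k * N - 1) by ring.
    exact: e0.
  have e2 : phi * ((k + 1) * N) <= k * ((N + 1) * N) by nra.
  have e3 : (1 - phi) * (phi * ((k + 1) * N)) <= (1 - phi) * (k * ((N + 1) * N)).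
    by apply: ler_wpM2l => //; lra.
  have -> : phi * (1 - phi) * ((k + 1) * N) = (1 - phi) * (phi * ((k + 1) * N)) by ring.
  have -> : (1 - phi) * k * ((N + 1) * N) = (1 - phi) * (k * ((N + 1) * N)) by ring.
  exact: e3.
- rewrite block_mxEdl /P21 mxE.
  case: eqP => _; last by rewrite mulr0n ltxx.
  move=> _; rewrite mulr1n ler_pdivrMr //.
  nra.
- rewrite block_mxEdr /P22 mxE => _.
  rewrite ler_pdivlMr; last lra.
  rewrite mulrAC ler_pdivrMr //.
  have f1 : phi * N <= (N + 1) * N by nra.
  have f2 : (1 - phi) * (phi * N) <= (1 - phi) * ((N + 1) * N).
    by apply: ler_wpM2l => //; lra.
  have -> : phi * (1 - phi) * N = (1 - phi) * (phi * N) by ring.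
  exact: f2.
Qed.
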